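(* Let $f^*:\{\pm1\}^d\to\mathbb R$. Then $f^*$ satisfies the stable merged-staircase property if and only if it satisfies the sufficient impurity decrease condition for some $\lambda>0$, namely: for every cell $C$ with $\operatorname{Var}\{f^*(\mathbf X)\mid\mathbf X\in C\}>0$, $\max_{k\in[d]\setminus J(C)}\operatorname{Corr}^2\{f^*(\mathbf X),X_k\mid\mathbf X\in C\}\ge\lambda$, where $\mathbf X$ is uniform on $\{\pm1\}^d$.
   Context: $\chi_S(\mathbf x)=\prod_{j\in S}x_j$. Every $f:\{\pm1\}^m\to\mathbb R$ has a unique expansion $f=\sum_S\beta_S\chi_S$; $f$ satisfies MSP if the sets $S$ with $\beta_S\ne0$ can be ordered $S_1,\dots,S_r$ with $|S_i\setminus\bigcup_{j<i}S_j|\le1$ for all $i$. A cell is $C=\{\mathbf x\in\{\pm1\}^d:x_j=z_j,\ j\in J(C)\}$ for some $J(C)\subset[d]$ and signs $z_j$; $f^*|_C$ is the restriction viewed as a function of $x_j$, $j\notin J(C)$. $f^*$ satisfies the stable merged-staircase property if $f^*|_C$ satisfies MSP for every cell $C$. *)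

(* Defs.v *)
From mathcomp Require Import all_boot all_order all_algebra.
From mathcomp Require Import reals.
Set Implicit Arguments. Unset Strict Implicit. Unset Printing Implicit Defensive.
Import Order.TTheory GRing.Theory Num.Theory.
Local Open Scope ring_scope.

(* Points of {±1}^d are encoded as x : {ffun 'I_d -> bool};
   the coordinate value of x at j is spin (x j) (true |-> 1, false |-> -1). *)
Definition spin {R : realType} (b : bool) : R := if b then 1 else -1.

Section Defs.
Variables (R : realType) (d : nat).
Notation pt := {ffun 'I_d -> bool}.

Definition chi (S : {set 'I_d}) (x : pt) : R := \prod_(j in S) spin (x j).

Definition cell (J : {set 'I_d}) (z : pt) : {set pt} :=
  [set x : pt | [forall j in J, x j == z j]].

Definition msp_support (supp : {set 'I_d} -> bool) : Prop :=
  exists s : seq {set 'I_d},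
    [/\ uniq s, (forall S, (S \in s) = supp S) &
        forall i, (i < size s)%N ->
          (#|nth set0 s i :\: \bigcup_(k < i) nth set0 s k| <= 1)%N].

(* f restricted to cell(J,z), viewed as a function of x_j, j notin J,
   satisfies MSP: its (unique) Fourier expansion in the free coordinates
   f|_C = sum_{S subset [d]\J} beta_S chi_S has merged-staircase support. *)
Definition msp_on_cell (f : pt -> R) (J : {set 'I_d}) (z : pt) : Prop :=
  exists beta : {set 'I_d} -> R,
    [/\ (forall S, beta S != 0 -> S \subset ~: J),
        (forall x, x \in cell J z ->
           f x = \sum_(S : {set 'I_d} | S \subset ~: J) beta S * chi S x) &
        msp_support (fun S => beta S != 0)].

Definition stable_msp (f : pt -> R) : Prop :=
  forall (J : {set 'I_d}) (z : pt), msp_on_cell f J z.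

(* conditional expectation given X in C, X uniform on {±1}^d *)
Definition cmean (C : {set pt}) (g : pt -> R) : R :=
  (\sum_(x in C) g x) / (#|C|%:R).

Definition cvar (C : {set pt}) (g : pt -> R) : R :=
  cmean C (fun x => (g x - cmean C g) ^+ 2).

Definition ccov (C : {set pt}) (g h : pt -> R) : R :=
  cmean C (fun x => (g x - cmean C g) * (h x - cmean C h)).

Definition ccorr2 (C : {set pt}) (g h : pt -> R) : R :=
  ccov C g h ^+ 2 / (cvar C g * cvar C h).

Definition coord (k : 'I_d) (x : pt) : R := spin (x k).

Definition SID (f : pt -> R) (lambda : R) : Prop :=
  forall (J : {set 'I_d}) (z : pt),
    0 < cvar (cell J z) f ->
    exists2 k : 'I_d, k \notin J &
      lambda <= ccorr2 (cell J z) f (coord k).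

End Defs.

(* Main.v *)
From Pilot Require Import Defs.
From mathcomp Require Import all_boot all_order all_algebra.
From mathcomp Require Import reals.
From mathcomp Require Import lra.
Set Implicit Arguments. Unset Strict Implicit. Unset Printing Implicit Defensive.
Import Order.TTheory GRing.Theory Num.Theory.
Local Open Scope ring_scope.

Section Greedy.
Variable d : nat.
Variable P : pred {set 'I_d}.
Hypothesis HP : forall U : {set 'I_d}, (exists S, P S && ~~ (S \subset U)) ->
  exists S, P S && (#|S :\: U| == 1)%N.

Definition pref_ok (s : seq {set 'I_d}) := forall i, (i < size s)%N ->
  (#|nth set0 s i :\: \bigcup_(k < i) nth set0 s k| <= 1)%N.

Lemma in_bigcup_s (s : seq {set 'I_d}) S : S \in s ->
  S \subset \bigcup_(k < size s) nth set0 s k.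
Proof. by move/(nthP set0) => [i hi <-]; exact: (bigcup_sup (Ordinal hi)). Qed.

Lemma greedy_ext s : (exists S0, P S0 && (S0 \notin s)) ->
  exists S', [&& P S', S' \notin s &
     (#|S' :\: \bigcup_(k < size s) nth set0 s k| <= 1)%N].
Proof.
move=> [S0 /andP[pS0 nS0]].
set U := \bigcup_(k < size s) nth set0 s k.
case: (boolP [exists S, P S && ~~ (S \subset U)]).
  move/existsP => [S hS]; have [S' /andP[pS' cS']] := HP (ex_intro _ S hS).
  exists S'; rewrite pS' (eqP cS') leqnn andbT /=.
  apply/negP => /in_bigcup_s; rewrite -/U -setD_eq0 => /eqP e.
  by move: cS'; rewrite e cards0.
move=> hn; exists S0; rewrite pS0 nS0 /=.
have : S0 \subset U.
  by apply: contraR hn => h; apply/existsP; exists S0; rewrite pS0 h.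
by rewrite -setD_eq0 => /eqP ->; rewrite cards0.
Qed.

Lemma greedy_main n : forall s, (#|[set S | P S & S \notin s]| <= n)%N ->
  uniq s -> all P s -> pref_ok s -> msp_support P.
Proof.
elim: n => [|n IH] s hc hu ha hp.
  exists s; split => // S; apply/idP/idP; first by move/(allP ha).
  move=> pS; apply: contraLR hc => nS; rewrite -ltnNge card_gt0.
  by apply/set0Pn; exists S; rewrite inE pS nS.
case: (boolP [exists S, P S && (S \notin s)]); last first.
  move=> hn; exists s; split => // S; apply/idP/idP; first by move/(allP ha).
  by move=> pS; apply: contraR hn => nS; apply/existsP; exists S; rewrite pS nS.
move/existsP => [S0 h0].
have [S' /and3P[pS' nS' cS']] := greedy_ext (ex_intro _ S0 h0).
apply: (IH (rcons s S')).
- have sub : [set S | P S & S \notin rcons s S'] \proper [set S | P S & S \notin s].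
    rewrite properE; apply/andP; split.
      by apply/subsetP => S; rewrite !inE mem_rcons in_cons negb_or => /andP[-> /andP[_ ->]].
    apply/subsetPn; exists S'; first by rewrite inE pS' nS'.
    by rewrite inE mem_rcons mem_head andbF.
  by rewrite -ltnS; apply: leq_trans hc; apply: proper_card.
- by rewrite rcons_uniq nS' hu.
- by rewrite all_rcons pS' ha.
- move=> i; rewrite size_rcons ltnS => hi.
  have E : \bigcup_(k < i) nth set0 (rcons s S') k = \bigcup_(k < i) nth set0 s k.
    by apply: eq_bigr => k _; rewrite nth_rcons (leq_trans (ltn_ord k) hi).
  rewrite E nth_rcons; case: ltnP => hi2; first exact: hp.
  have -> : i = size s by apply/eqP; rewrite eqn_leq hi hi2.
  by rewrite eqxx.
Qed.

Lemma greedy : msp_support P.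
Proof.
apply: (@greedy_main #|[set S | P S & S \notin [::]]| [::]) => //.
Qed.
End Greedy.

Section Analytic.
Variables (R : realType) (d : nat).
Notation pt := {ffun 'I_d -> bool}.
Implicit Types (J U V S : {set 'I_d}) (z w x y : pt) (k : 'I_d) (C : {set pt}).

Definition flip (k : 'I_d) (x : pt) : pt :=
  [ffun j => if j == k then ~~ x j else x j].

Lemma flipK k : involutive (flip k).
Proof. by move=> x; apply/ffunP => j; rewrite !ffunE; case: eqP => // _; rewrite negbK. Qed.

Lemma flip_cell J z k x : k \notin J -> (flip k x \in cell J z) = (x \in cell J z).
Proof.
move=> hk; rewrite !inE; apply: eq_forallb => j; rewrite ffunE.
by case: (eqVneq j k) => [->|//]; rewrite (negbTE hk).
Qed.

Lemma sum_flip J z k (g : pt -> R) : k \notin J ->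
  \sum_(x in cell J z) g x = \sum_(x in cell J z) g (flip k x).
Proof.
move=> hk; rewrite (reindex_inj (can_inj (flipK k))) /=.
by apply: eq_bigl => x; rewrite flip_cell.
Qed.

Lemma spin_sq b : spin b * spin b = 1 :> R.
Proof. by case: b; rewrite /spin ?mulr1 ?mulrNN ?mulr1. Qed.

Lemma spin_neg b : spin (~~ b) = - spin b :> R.
Proof. by case: b; rewrite /spin ?opprK. Qed.

Lemma chi_flip V k x : k \in V -> chi R V (flip k x) = - chi R V x.
Proof.
move=> hk; rewrite /chi (bigD1 k hk) [in RHS](bigD1 k hk) /= ffunE eqxx spin_neg.
rewrite mulNr; congr (- (_ * _)); apply: eq_bigr => j /andP[_ hj].
by rewrite ffunE (negbTE hj).
Qed.

Lemma sum_chi0 J z V k : k \notin J -> k \in V ->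
  \sum_(x in cell J z) chi R V x = 0.
Proof.
move=> hk hV; have e := sum_flip z (chi R V) hk.
have e2 : \sum_(x in cell J z) chi R V (flip k x) = \sum_(x in cell J z) - chi R V x.
  by apply: eq_bigr => x _; rewrite chi_flip.
move: e; rewrite e2 sumrN => e; lra.
Qed.

Lemma chi_coord S k x : chi R S x * @Pilot.Defs.coord R d k x =
  chi R (if k \in S then S :\ k else k |: S) x.
Proof.
rewrite /Pilot.Defs.coord; case: ifP => hk.
  rewrite /chi (bigD1 k hk) /= mulrC mulrA spin_sq mul1r.
  by apply: eq_bigl => j; rewrite in_setD1 andbC.
by rewrite /chi big_setU1 ?hk //= mulrC.
Qed.

Lemma chi0 x : chi R set0 x = 1.
Proof. by rewrite /chi big_set0. Qed.

Lemma cell_self J z : z \in cell J z.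
Proof. by rewrite inE; apply/forallP => j; apply/implyP => _. Qed.

Lemma cell_gt0 J z : (0 < #|cell J z|)%N.
Proof. by apply/card_gt0P; exists z; exact: cell_self. Qed.

Lemma sum_coord0 J z k : k \notin J -> \sum_(x in cell J z) @Pilot.Defs.coord R d k x = 0.
Proof.
move=> hk; transitivity (\sum_(x in cell J z) chi R [set k] x).
  by apply: eq_bigr => x _; rewrite /chi big_set1.
exact: (@sum_chi0 J z [set k] k hk (set11 k)).
Qed.

Lemma sum_rep_coord (g : pt -> R) (be : {set 'I_d} -> R) (A : pred {set 'I_d}) J w k :
  k \notin J -> (forall x, x \in cell J w -> g x = \sum_(S | A S) be S * chi R S x) ->
  \sum_(x in cell J w) g x * @Pilot.Defs.coord R d k x =
  \sum_(S | A S && (k \in S) && (S :\ k \subset J))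
     be S * \sum_(x in cell J w) chi R (S :\ k) x.
Proof.
move=> hk hrep.
transitivity (\sum_(x in cell J w) \sum_(S | A S)
     be S * chi R (if k \in S then S :\ k else k |: S) x).
  apply: eq_bigr => x hx; rewrite (hrep x hx) mulr_suml.
  by apply: eq_bigr => S _; rewrite -mulrA chi_coord.
rewrite exchange_big /=.
rewrite (bigID (fun S => (k \in S) && (S :\ k \subset J))) /= [X in _ + X]big1 ?addr0.
  apply: eq_big => [S|S /andP[_ /andP[kS _]]]; first by rewrite andbA.
  by rewrite -mulr_sumr kS.
move=> S /andP[_ hn]; rewrite -mulr_sumr.
suff -> : \sum_(i in cell J w) chi R (if k \in S then S :\ k else k |: S) i = 0
  by rewrite mulr0.
move: hn; case: ifP => kS /=.
  by move/subsetPn => [j hj hjJ]; apply: (sum_chi0 _ hjJ hj).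
by move=> _; apply: (sum_chi0 _ hk); rewrite setU11.
Qed.

Lemma ccov_coord g J z k : k \notin J ->
  ccov (cell J z) g (@Pilot.Defs.coord R d k) =
  (\sum_(x in cell J z) g x * @Pilot.Defs.coord R d k x) / #|cell J z|%:R.
Proof.
move=> hk; rewrite /ccov /cmean sum_coord0 // mul0r.
congr (_ / _).
under eq_bigr do rewrite subr0 mulrBl.
by rewrite sumrB -mulr_sumr sum_coord0 // mulr0 subr0.
Qed.

Lemma cvar_coord J z k : k \notin J -> cvar (cell J z) (@Pilot.Defs.coord R d k) = 1.
Proof.
move=> hk; rewrite /cvar /cmean sum_coord0 // mul0r.
under eq_bigr do rewrite subr0 expr2 /Pilot.Defs.coord spin_sq.
rewrite sumr_const mulfV // pnatr_eq0 -lt0n; exact: cell_gt0.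
Qed.

Lemma cvar_ge0 C (g : pt -> R) : 0 <= cvar C g.
Proof.
rewrite /cvar /cmean; apply: divr_ge0; last exact: ler0n.
by apply: sumr_ge0 => x _; exact: sqr_ge0.
Qed.

Lemma cvar0_const C (g : pt -> R) x y : cvar C g <= 0 -> x \in C -> y \in C -> g x = g y.
Proof.
move=> hv hx hy.
have Cp : (0 < #|C|)%N by apply/card_gt0P; exists x.
have e : \sum_(x in C) (g x - cmean C g) ^+ 2 = 0.
  have h0 : cvar C g = 0 by apply/eqP; rewrite eq_le hv cvar_ge0.
  move: h0; rewrite /cvar /cmean => /eqP; rewrite mulf_eq0 invr_eq0 pnatr_eq0 (gtn_eqF Cp) orbF.
  by move/eqP.
have := psumr_eq0P (fun i _ => sqr_ge0 (g i - cmean C g)) e.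
move=> H; have := H x hx; have := H y hy.
by move/eqP; rewrite sqrf_eq0 subr_eq0 => /eqP -> /eqP; rewrite sqrf_eq0 subr_eq0 => /eqP.
Qed.


Lemma sum_subset_prod (K : {set 'I_d}) (a : 'I_d -> R) :
  \sum_(S : {set 'I_d} | S \subset K) \prod_(j in S) a j = \prod_(j in K) (1 + a j).
Proof.
have -> : \prod_(j in K) (1 + a j) = \prod_j ((if j \in K then a j else 0) + 1).
  rewrite big_mkcond; apply: eq_bigr => j _; case: ifP => _; first by rewrite addrC.
  by rewrite add0r.
rewrite bigA_distr big_mkcond /=; apply: eq_big => // S _.
case: ifP => sK.
  rewrite big_mkcond; apply: eq_bigr => j _; case: ifP => // jS.
  by rewrite (subsetP sK j jS).
move/negbT/subsetPn: sK => [j jS jK].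
by rewrite (bigD1 j) //= jS (negbTE jK) mul0r.
Qed.

Lemma kernel J z x y : x \in cell J z -> y \in cell J z ->
  \sum_(S : {set 'I_d} | S \subset ~: J) chi R S y * chi R S x =
  if y == x then 2 ^+ #|~: J| else 0.
Proof.
move=> hx hy.
transitivity (\sum_(S : {set 'I_d} | S \subset ~: J)
                \prod_(j in S) (spin (y j) * spin (x j) : R)).
  by apply: eq_bigr => S _; rewrite /chi big_split.
rewrite sum_subset_prod; case: eqVneq => [->|ne].
  under eq_bigr do rewrite spin_sq.
  by rewrite prodr_const.
have : ~~ [forall j, y j == x j].
  by apply: contra ne => /forallP h; apply/eqP/ffunP => j; apply/eqP.
rewrite negb_forall => /existsP[j hj].
have jJ : j \in ~: J.
  rewrite inE; apply: contra hj => jJ.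
  move: hx hy; rewrite !inE => /forallP/(_ j); rewrite jJ /= => /eqP ->.
  by move/forallP/(_ j); rewrite jJ.
rewrite (bigD1 j jJ) /=.
have -> : x j = ~~ y j by move: hj; case: (y j); case: (x j).
by rewrite spin_neg mulrN spin_sq subrr mul0r.
Qed.

Lemma fourier (g : pt -> R) J z x : x \in cell J z ->
  g x = \sum_(S : {set 'I_d} | S \subset ~: J)
     (((2 : R) ^+ #|~: J|)^-1 * \sum_(y in cell J z) g y * chi R S y) * chi R S x.
Proof.
move=> hx; set c := ((2 : R) ^+ #|~: J|)^-1.
have t0 : (2 : R) ^+ #|~: J| != 0 by rewrite expf_neq0 // pnatr_eq0.
transitivity (c * \sum_(y in cell J z) g y *
                \sum_(S : {set 'I_d} | S \subset ~: J) chi R S y * chi R S x).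
  rewrite (eq_bigr (fun y => g y * (if y == x then 2 ^+ #|~: J| else 0)));
    last by move=> y hy; rewrite (kernel hx hy).
  rewrite (bigD1 x hx) /= eqxx big1 ?addr0; last first.
    by move=> y /andP[_ /negbTE ->]; rewrite mulr0.
  by rewrite /c mulrCA mulVf // mulr1.
under eq_bigr do rewrite mulr_sumr.
rewrite exchange_big mulr_sumr; apply: eq_bigr => S _.
rewrite -mulrA mulr_suml; congr (_ * _); apply: eq_bigr => y _.
by rewrite mulrA.
Qed.

Lemma sub_cell J U z w x : w \in cell J z -> x \in cell (J :|: U) w -> x \in cell J z.
Proof.
rewrite !inE => /forallP hw /forallP hx; apply/forallP => j; apply/implyP => jJ.
have := hx j; rewrite inE jJ /= => /eqP ->.
by have := hw j; rewrite jJ.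
Qed.

Lemma fin_lambda (T : finType) (P : pred T) (Q : T -> R -> Prop) :
  (forall p u v, 0 < u -> u <= v -> Q p v -> Q p u) ->
  (forall p, P p -> exists2 v, 0 < v & Q p v) ->
  exists2 l, 0 < l & forall p, P p -> Q p l.
Proof.
move=> hmono hex.
suff : forall s : seq T, exists2 l, 0 < l & forall p, p \in s -> P p -> Q p l.
  by move/(_ (enum T)) => [l lp H]; exists l => // p; apply: H; rewrite mem_enum.
elim => [|a s [l lp IH]]; first by exists 1.
case: (boolP (P a)) => Pa.
  have [v vp Qv] := hex a Pa.
  exists (Num.min l v); first by rewrite lt_min lp vp.
  move=> p; rewrite inE => /orP[/eqP->|ps] Pp.
    by apply: (hmono _ _ v) Qv; rewrite ?lt_min ?lp ?vp // ge_min lexx orbT.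
  by apply: (hmono _ _ l) (IH p ps Pp); rewrite ?lt_min ?lp ?vp // ge_min lexx.
exists l => // p; rewrite inE => /orP[/eqP->|ps] Pp; first by rewrite Pp in Pa.
exact: IH.
Qed.

Lemma fwd_cell (f : pt -> R) J z : msp_on_cell f J z -> 0 < cvar (cell J z) f ->
  exists2 k, k \notin J & 0 < ccorr2 (cell J z) f (@Pilot.Defs.coord R d k).
Proof.
move=> [be [hsupp hrep [s [hu hmem hpref]]]] hv.
have [S1 /andP[nz1 b1]] : exists S1, (S1 != set0) && (be S1 != 0).
  case: (boolP [exists S1, (S1 != set0) && (be S1 != 0)]) => [/existsP //|hn]; exfalso.
  have hc : forall x, x \in cell J z -> f x = be set0.
    move=> x hx; rewrite (hrep x hx) (bigD1 set0) ?sub0set //= chi0 mulr1 big1 ?addr0 //.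
    move=> S /andP[_ nS]; have -> : be S = 0; last by rewrite mul0r.
    apply/eqP; apply: contraNT hn => h; apply/existsP; exists S; by rewrite nS h.
  have Cp := cell_gt0 J z.
  have n0 : (#|cell J z|%:R : R) != 0 by rewrite pnatr_eq0 (gtn_eqF Cp).
  have hm : cmean (cell J z) f = be set0.
    by rewrite /cmean (eq_bigr _ hc) sumr_const -[X in X / _]mulr_natr mulfK.
  move: hv; rewrite /cvar hm /cmean (eq_bigr (fun _ => 0)) ?big1 ?mul0r ?ltxx //.
  by move=> x hx; rewrite hc // subrr expr2 mul0r.
have S1s : S1 \in s by rewrite hmem.
set i := find (fun S => S != set0) s.
have hhas : has (fun S => S != set0) s by apply/hasP; exists S1.
have hi : (i < size s)%N by rewrite -has_find.
have ni : nth set0 s i != set0 := nth_find set0 hhas.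
have U0 : \bigcup_(k < i) nth set0 s k = set0.
  apply: big1 => k _; have := before_find set0 (ltn_ord k).
  by move/negbFE/eqP.
have := hpref i hi; rewrite U0 setD0 => c1.
have : #|nth set0 s i| == 1%N by rewrite eqn_leq c1 card_gt0 ni.
move/cards1P => [k hk].
have bk : be [set k] != 0 by rewrite -hk -hmem mem_nth.
have kJ : k \notin J by have := hsupp _ bk; rewrite sub1set inE.
exists k => //.
rewrite /ccorr2 (ccov_coord _ _ kJ) (cvar_coord _ kJ) mulr1.
rewrite (sum_rep_coord (A := fun S => S \subset ~: J) kJ hrep).
rewrite (eq_bigl (fun S => S == [set k])); last first.
  move=> S; apply/idP/eqP => [/andP[/andP[sJ kS] sk] | ->].
    apply/setP => j; rewrite inE; apply/idP/eqP => [jS|->//].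
    case: (eqVneq j k) => // ne.
    have jSk : j \in S :\ k by rewrite in_setD1 ne jS.
    have := subsetP sk j jSk; have := subsetP sJ j jS; rewrite inE => /negbTE ->.
    by [].
  by rewrite sub1set inE kJ set11 setDv sub0set.
have Cp := cell_gt0 J z.
have n0 : (#|cell J z|%:R : R) != 0 by rewrite pnatr_eq0 (gtn_eqF Cp).
rewrite big_pred1_eq setDv.
under eq_bigr do rewrite chi0.
rewrite sumr_const mulfK //.
apply: divr_gt0 => //.
by rewrite lt_def sqrf_eq0 bk sqr_ge0.
Qed.

Lemma bwd_cell (f : pt -> R) l J z : 0 < l -> SID f l -> msp_on_cell f J z.
Proof.
move=> lp hsid.
pose be := fun S : {set 'I_d} => if S \subset ~: J then
   ((2 : R) ^+ #|~: J|)^-1 * \sum_(y in cell J z) f y * chi R S y else 0.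
have hrep : forall x, x \in cell J z ->
    f x = \sum_(S : {set 'I_d} | S \subset ~: J) be S * chi R S x.
  by move=> x hx; rewrite (fourier f hx); apply: eq_bigr => S sJ; rewrite /be sJ.
exists be; split => //.
  by move=> S; rewrite /be; case: ifP => // _; rewrite eqxx.
apply: greedy => U [S /andP[bS nSU]].
case: (boolP [exists S', (be S' != 0) && (#|S' :\: U| == 1)%N]) => [/existsP[S' h]|hno].
  by exists S'.
exfalso; move: bS; apply/negP; rewrite negbK.
have hconst : forall w, w \in cell J z -> forall x, x \in cell (J :|: U) w -> f x = f w.
  move=> w hw x hx; apply: (cvar0_const _ hx (cell_self _ _)).
  rewrite leNgt; apply/negP => hv.
  have [k hk hl] := hsid _ _ hv.
  suff e : ccorr2 (cell (J :|: U) w) f (@Pilot.Defs.coord R d k) = 0.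
    by move: hl; rewrite e => hl; have := lt_le_trans lp hl; rewrite ltxx.
  rewrite /ccorr2 (ccov_coord _ _ hk).
  rewrite (sum_rep_coord (A := fun S => S \subset ~: J) (be := be) hk); last first.
    by move=> y hy; apply: hrep; apply: sub_cell hw hy.
  rewrite big1 ?mul0r ?expr2 ?mul0r ?mul0r //.
  move=> S0 /andP[/andP[sJ kS] sk].
  have -> : be S0 = 0; last by rewrite mul0r.
  apply/eqP; apply: contraNT hno => h; apply/existsP; exists S0; rewrite h /=.
  have -> : S0 :\: U = [set k]; last by rewrite cards1.
  have kU : k \notin U by move: hk; rewrite inE negb_or => /andP[_].
  apply/setP => j; rewrite !inE; apply/idP/eqP => [/andP[jU jS]|->]; last by rewrite kU kS.
  case: (eqVneq j k) => // ne.
  have jSk : j \in S0 :\ k by rewrite in_setD1 ne jS.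
  have := subsetP sk j jSk; rewrite inE (negbTE jU) orbF.
  by have := subsetP sJ j jS; rewrite inE => /negbTE ->.
rewrite /be; case: ifP => sJ; last by rewrite eqxx.
move/subsetPn: nSU => [k kS kU].
have kJ : k \notin J by have := subsetP sJ k kS; rewrite inE.
suff -> : \sum_(y in cell J z) f y * chi R S y = 0 by rewrite mulr0.
have e := sum_flip z (fun y => f y * chi R S y) kJ.
have e2 : \sum_(y in cell J z) f (flip k y) * chi R S (flip k y) =
          \sum_(y in cell J z) - (f y * chi R S y).
  apply: eq_bigr => y hy; rewrite chi_flip // mulrN; congr (- (_ * _)).
  apply: (hconst y hy (flip k y)).
  by rewrite flip_cell ?cell_self // inE negb_or kJ kU.
by move: e; rewrite e2 sumrN => e; lra.
Qed.
End Analytic.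

Theorem propositionG2 (R : realType) (d : nat)
    (f : {ffun 'I_d -> bool} -> R) :
  stable_msp f <-> exists2 lambda : R, 0 < lambda & SID f lambda.
Proof.
split.
  move=> hs.
  pose P := fun p : ({set 'I_d} * {ffun 'I_d -> bool})%type => 0 < cvar (cell p.1 p.2) f.
  pose Q := fun (p : ({set 'I_d} * {ffun 'I_d -> bool})%type) (u : R) =>
     exists2 k, k \notin p.1 & u <= ccorr2 (cell p.1 p.2) f (@Pilot.Defs.coord R d k).
  have hfl : exists2 l, 0 < l & forall p, P p -> Q p l.
    apply: (@fin_lambda R _ P Q).
      by move=> p u v _ uv [k hk hv]; exists k => //; exact: le_trans uv hv.
    move=> p hv; have [k hk hc] := fwd_cell (hs p.1 p.2) hv.
    by exists (ccorr2 (cell p.1 p.2) f (@Pilot.Defs.coord R d k)) => //; exists k.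
  have [l lp H] := hfl.
  by exists l => // J z hv; exact: (H (J, z) hv).
by move=> [l lp hsid] J z; exact: (bwd_cell J z lp hsid).
Qed.
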